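(* For every integer $m\ge3$ and every $\alpha\in[0,1]$, every deterministic social choice rule that always returns a candidate whose integral domination graph admits a perfect matching has distortion exactly $2+\alpha$ on $\alpha$-decisive metric spaces.
   Context: An election: voters $V=\{1,\dots,n\}$, a fixed finite set $C$ of $m$ candidates, a profile $\sigma$ of linear orders over $C$; $a\succeq_i c$ means $a=c$ or $i$ ranks $a$ above $c$; $\mathrm{top}(i)$ is $i$'s first choice. The integral domination graph $G(a)$ is the bipartite graph with both sides copies of $V$ and edge $(i,j)$ iff $a\succeq_i\mathrm{top}(j)$; for every election some candidate has $G(a)$ admitting a perfect matching. A distance function $d$ on $V\cup C$ is nonnegative, symmetric and satisfies the triangle inequality (co-location allowed); consistent with $\sigma$ if $d(i,c)\le d(i,c')$ whenever $i$ ranks $c$ above $c'$; $\alpha$-decisive if $d(i,\mathrm{top}(i))\le\alpha\,d(i,c)$ for all $i$ and $c\ne\mathrm{top}(i)$. $\mathrm{SC}(c)=\sum_i d(i,c)$. Distortion of a deterministic rule $f$ on $\alpha$-decisive spaces: $\sup_\sigma\sup_d\mathrm{SC}(f(\sigma))/\min_c\mathrm{SC}(c)$ over $\alpha$-decisive consistent $d$. *)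

(* Defs.v *)
From HB Require Import structures.
From mathcomp Require Import all_boot all_order all_algebra.
From mathcomp Require Import fingroup perm.
From mathcomp Require Import reals.
Set Implicit Arguments. Unset Strict Implicit. Unset Printing Implicit Defensive.
Import Order.TTheory GRing.Theory Num.Theory.
Local Open Scope ring_scope.

(* Voters are 'I_n, candidates are 'I_m.  A profile gives, for each voter i,
   a linear order on candidates, encoded as the bijective rank function
   s i : {perm 'I_m}  (rank 0 = first choice). *)
Definition profile (n m : nat) := 'I_n -> {perm 'I_m}.

Definition ranks_above n m (s : profile n m) (i : 'I_n) (a c : 'I_m) : bool :=
  (s i a < s i c)%N.

Definition weakly_prefers n m (s : profile n m) (i : 'I_n) (a c : 'I_m) : bool :=
  (a == c) || ranks_above s i a c.

Definition is_top n m (s : profile n m) (i : 'I_n) (c : 'I_m) : bool :=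
  (nat_of_ord (s i c) == 0)%N.

Definition idg_edge n m (s : profile n m) (a : 'I_m) (i j : 'I_n) : Prop :=
  exists t, is_top s j t /\ weakly_prefers s i a t.

(* G(a) (bipartite, both sides copies of V) admits a perfect matching *)
Definition has_perfect_matching n m (s : profile n m) (a : 'I_m) : Prop :=
  exists p : {perm 'I_n}, forall i, idg_edge s a i (p i).

Definition point (n m : nat) := ('I_n + 'I_m)%type.

Definition is_distance (R : realType) n m (d : point n m -> point n m -> R) : Prop :=
  [/\ (forall x y, 0 <= d x y),
      (forall x y, d x y = d y x) &
      (forall x y z, d x z <= d x y + d y z)].

Definition consistent (R : realType) n m (s : profile n m)
    (d : point n m -> point n m -> R) : Prop :=
  forall i c c', ranks_above s i c c' -> d (inl i) (inr c) <= d (inl i) (inr c').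

Definition decisive (R : realType) (alpha : R) n m (s : profile n m)
    (d : point n m -> point n m -> R) : Prop :=
  forall i t c, is_top s i t -> c != t ->
    d (inl i) (inr t) <= alpha * d (inl i) (inr c).

Definition SC (R : realType) n m (d : point n m -> point n m -> R) (c : 'I_m) : R :=
  \sum_(i < n) d (inl i) (inr c).

Definition admissible (R : realType) (alpha : R) n m (s : profile n m)
    (d : point n m -> point n m -> R) : Prop :=
  [/\ is_distance d, consistent s d & decisive alpha s d].

Definition rule (m : nat) := forall n : nat, profile n m -> 'I_m.

(* distortion of f on alpha-decisive spaces equals D, i.e.
   sup_{n,s,d} SC(f s)/min_c SC(c) = D : upper bound (multiplicative form)
   plus approximate attainment *)
Definition distortion_eq (R : realType) m (f : rule m) (alpha D : R) : Prop :=
  (forall n (s : profile n m) (d : point n m -> point n m -> R),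
      admissible alpha s d -> forall c, SC d (f n s) <= D * SC d c) /\
  (forall eps : R, 0 < eps ->
      exists n (s : profile n m) (d : point n m -> point n m -> R),
        admissible alpha s d /\ exists c, (D - eps) * SC d c < SC d (f n s)).

(* Main.v *)
Require Import Defs.
From HB Require Import structures.
From mathcomp Require Import all_boot all_order all_algebra.
From mathcomp Require Import fingroup perm.
From mathcomp Require Import reals lra zify.
Set Implicit Arguments. Unset Strict Implicit. Unset Printing Implicit Defensive.
Import Order.TTheory GRing.Theory Num.Theory.
Local Open Scope ring_scope.

Lemma upper_voter (R : realType) (alpha : R) n m (s : profile n m)
  (d : point n m -> point n m -> R) (w c : 'I_m) (i j : 'I_n) :
  0 <= alpha -> admissible alpha s d -> idg_edge s w i j ->
  d (inl i) (inr w) <= d (inl i) (inr c) + (1 + alpha) * d (inl j) (inr c).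
Proof.
move=> ha [[d0 dsym dtri] dcons ddec] [t [tt wt]].
have h1 : d (inl i) (inr w) <= d (inl i) (inr t).
  case/orP: wt => [/eqP -> | /dcons //]; exact: lexx.
have hj := d0 (inl j) (inr c).
have hpos : 0 <= alpha * d (inl j) (inr c) by apply: mulr_ge0.
case: (eqVneq c t) => [ct | ct].
  subst t; lra.
have h2 := ddec j t c tt ct.
have h3 := dtri (inl i) (inr c) (inr t).
have h4 := dtri (inr c) (inl j) (inr t).
rewrite (dsym (inr c) (inl j)) in h4.
rewrite (dsym (inl j) (inr t)) in h2 h4 *.
lra.
Qed.

Lemma upper (R : realType) (alpha : R) m (f : rule m) :
  0 <= alpha ->
  (forall n (s : profile n m), has_perfect_matching s (f n s)) ->
  forall n (s : profile n m) (d : point n m -> point n m -> R),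
      admissible alpha s d -> forall c, SC d (f n s) <= (2 + alpha) * SC d c.
Proof.
move=> ha hf n s d hd c.
have [p hp] := hf n s.
rewrite /SC.
apply: (@le_trans _ _ (\sum_(i < n) (d (inl i) (inr c) + (1 + alpha) * d (inl (p i)) (inr c)))).
  apply: ler_sum => i _; exact: (@upper_voter R alpha n m s d (f n s) c i (p i) ha hd (hp i)).
rewrite big_split /= -mulr_sumr.
rewrite -(reindex_inj (h := p) (F := fun j => d (inl j) (inr c)) (P := xpredT)) //; last exact: perm_inj.
lra.
Qed.

Section Low.
Variable m' : nat.
Notation m := m'.+3.
Definition c0 : 'I_m := @Ordinal m 0 isT.
Definition c1 : 'I_m := @Ordinal m 1 isT.
Definition c2 : 'I_m := @Ordinal m 2 isT.

Definition tab (g v : nat) : nat :=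
  match v with
  | 0 => match g with 0 => 1 | 1 => 0 | 2 => 1 | _ => 0 end
  | 1 => match g with 0 => 0 | 1 => 1 | 2 => 2 | _ => 2 end
  | 2 => match g with 0 => 2 | 1 => 2 | 2 => 0 | _ => 1 end
  | _ => v end.

Definition permg (g : nat) : {perm 'I_m} :=
  match g with 0 => tperm c0 c1 | 1 => 1%g | 2 => (tperm c0 c2 * tperm c1 c2)%g
  | _ => tperm c1 c2 end.

Lemma permg_val g (c : 'I_m) : nat_of_ord (permg g c) = tab g (nat_of_ord c).
Proof.
have n01 : c0 != c1 by []. have n02 : c0 != c2 by [].
have n12 : c1 != c2 by [].
have n10 : c1 != c0 by []. have n20 : c2 != c0 by [].
have n21 : c2 != c1 by [].
case: c => [[|[|[|v]]] hc].
- have -> : Ordinal hc = c0 by apply: val_inj.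
  by case: g => [|[|[|g]]] /=; rewrite ?permM ?perm1 ?tpermL ?tpermR ?(tpermD n12 n02) ?(tpermD n10 n20) ?tpermL ?tpermR.
- have -> : Ordinal hc = c1 by apply: val_inj.
  by case: g => [|[|[|g]]] /=; rewrite ?permM ?perm1 ?tpermL ?tpermR ?(tpermD n01 n21) ?(tpermD n02 n12) ?tpermL ?tpermR.
- have -> : Ordinal hc = c2 by apply: val_inj.
  by case: g => [|[|[|g]]] /=; rewrite ?permM ?perm1 ?tpermL ?tpermR ?(tpermD n02 n12) ?(tpermD n01 n21) ?(tpermD n10 n20) ?tpermL ?tpermR.
- have h0 : c0 != Ordinal hc by rewrite /eq_op. have h1 : c1 != Ordinal hc by rewrite /eq_op.
  have h2 : c2 != Ordinal hc by rewrite /eq_op.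
  by case: g => [|[|[|g]]] /=; rewrite ?permM ?perm1 ?(tpermD h0 h1) ?(tpermD h0 h2) ?(tpermD h1 h2).
Qed.

Definition topv (g : nat) : nat := match g with 0 => 1 | 1 => 0 | 2 => 2 | _ => 0 end.

Lemma top_nat g v : tab g v = 0%N -> v = topv g.
Proof. by case: v => [|[|[|v]]]; case: g => [|[|[|g]]]. Qed.

Lemma nat_b g g' : (1 < g)%N -> (1 == topv g') || (tab g 1 < tab g (topv g'))%N -> g' = 0%N.
Proof. by case: g => [|[|[|g]]] //; case: g' => [|[|[|g']]]. Qed.

Lemma nat_x g g' : (g <= 1)%N -> (2 == topv g') || (tab g 2 < tab g (topv g'))%N -> g' = 2%N.
Proof. by case: g => [|[|[|g]]] //; case: g' => [|[|[|g']]]. Qed.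

Lemma nat_o g g' v : (3 <= v)%N -> (v == topv g') || (tab g v < tab g (topv g'))%N -> False.
Proof.
case: v => [|[|[|v]]] // _; case: g => [|[|[|g]]]; case: g' => [|[|[|g']]] //=;
  rewrite ltnNge; by case: v.
Qed.

Variable k : nat.
Notation n := (k.+1 + k.+1)%N.

Definition grp (v : nat) : nat :=
  if (v < k)%N then 0 else if v == k then 1 else if (v < k.+1 + k)%N then 2 else 3.

Definition prof : profile n m := fun i => permg (grp i).

Lemma is_top_prof j t : is_top prof j t -> nat_of_ord t = topv (grp j).
Proof. by rewrite /is_top /prof permg_val => /eqP /top_nat. Qed.

Lemma wp_prof i w t : weakly_prefers prof i w t =
  (nat_of_ord w == nat_of_ord t) || (tab (grp i) w < tab (grp i) t)%N.
Proof. by rewrite /weakly_prefers /ranks_above /prof !permg_val. Qed.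

Lemma no_b : ~ has_perfect_matching prof c1.
Proof.
move=> [p hp].
have H : forall i : 'I_k.+1, (p (rshift k.+1 i) < k)%N.
  move=> i; have [t [tt wt]] := hp (rshift k.+1 i).
  move: wt; rewrite wp_prof (is_top_prof tt) => /nat_b.
  have -> : (1 < grp (rshift k.+1 i))%N.
    rewrite /grp /=; case: ifP => ?; [lia|]; case: ifP => ?; [lia|]; by case: ifP.
  move=> /(_ isT); rewrite /grp.
  case: ifP => ?; [lia|]; case: ifP => ?; [lia|]; case: ifP => ?; lia.
pose g := fun i => Ordinal (H i).
have gi : injective g.
  move=> i j /(congr1 val) /= /val_inj /perm_inj; exact: rshift_inj.
by have := leq_card g gi; rewrite !card_ord ltnn.
Qed.

Lemma no_x : ~ has_perfect_matching prof c2.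
Proof.
move=> [p hp].
have H : forall i : 'I_k.+1, (p (lshift k.+1 i) - k.+1 < k)%N /\ (k.+1 <= p (lshift k.+1 i))%N.
  move=> i; have [t [tt wt]] := hp (lshift k.+1 i).
  move: wt; rewrite wp_prof (is_top_prof tt) => /nat_x.
  have -> : (grp (lshift k.+1 i) <= 1)%N.
    rewrite /grp /=; case: ifP => // h1; case: ifP => // /negbT h2.
    exfalso; have := ltn_ord i; lia.
  move=> /(_ isT); rewrite /grp.
  set v := nat_of_ord (p _).
  case: ifP => // h1; case: ifP => // /negbT h2; case: ifP => // h3 _.
  split; lia.
pose g := fun i => Ordinal (proj1 (H i)).
have gi : injective g.
  move=> i j /(congr1 val) /= e.
  have e' : nat_of_ord (p (lshift k.+1 i)) = p (lshift k.+1 j).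
    have := proj2 (H i); have := proj2 (H j); lia.
  by move/val_inj: e' => /perm_inj /lshift_inj.
by have := leq_card g gi; rewrite !card_ord ltnn.
Qed.

Lemma no_o (w : 'I_m) : (3 <= w)%N -> ~ has_perfect_matching prof w.
Proof.
move=> hw [p hp]; have [t [tt wt]] := hp (lshift k.+1 ord0).
by move: wt; rewrite wp_prof (is_top_prof tt) => /(nat_o hw).
Qed.

Lemma win (f : rule m) : (forall n (s : profile n m), has_perfect_matching s (f n s)) ->
  f n prof = c0.
Proof.
move=> hf; have := hf n prof; case: (f n prof) => [v hv] h.
case: v hv h => [|[|[|v]]] hv h.
- by apply: val_inj.
- have e : Ordinal hv = c1 by apply: val_inj.
  by rewrite e in h; case: (no_b h).
- have e : Ordinal hv = c2 by apply: val_inj.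
  by rewrite e in h; case: (no_x h).
- by case: (no_o (w := Ordinal hv) isT h).
Qed.

Inductive loc := Pa | Pb | Pj | Px | Pf.

Variable R : realType.
Variable alpha : R.
Hypothesis ha0 : 0 <= alpha.
Hypothesis ha1 : alpha <= 1.

Definition D (u v : loc) : R :=
  match u, v with
  | Pa, Pa | Pb, Pb | Pj, Pj | Px, Px | Pf, Pf => 0
  | Pf, _ | _, Pf => 3
  | Pa, Pb | Pb, Pa => 1 + alpha
  | Pa, Pj | Pj, Pa => 1
  | Pa, Px | Px, Pa => 1 + alpha
  | Pb, Pj | Pj, Pb => 1
  | Pb, Px | Px, Pb => 1 + alpha
  | Pj, Px | Px, Pj => alpha
  end.

Lemma D_ge0 u v : 0 <= D u v.
Proof. have := ha0; have := ha1; case: u; case: v => /= *; lra. Qed.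
Lemma D_sym u v : D u v = D v u.
Proof. by case: u; case: v. Qed.
Lemma D_tri u v w : D u w <= D u v + D v w.
Proof. have := ha0; have := ha1; case: u; case: v; case: w => /= *; lra. Qed.

Definition locg (g : nat) := match g with 0 => Pb | 1 => Pa | 2 => Pj | _ => Pa end.
Definition locc (v : nat) := match v with 0 => Pa | 1 => Pb | 2 => Px | _ => Pf end.
Definition locp (x : point n m) := match x with inl i => locg (grp i) | inr c => locc c end.
Definition dist (x y : point n m) : R := D (locp x) (locp y).

Lemma cons_nat g v v' : (tab g v < tab g v')%N -> D (locg g) (locc v) <= D (locg g) (locc v').
Proof.
have := ha0; have := ha1; case: g => [|[|[|g]]]; case: v => [|[|[|v]]]; case: v' => [|[|[|v']]] => //= *; lra.
Qed.

Lemma dec_nat g v v' : tab g v = 0%N -> v <> v' -> D (locg g) (locc v) <= alpha * D (locg g) (locc v').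
Proof.
have := ha0; have := ha1; case: g => [|[|[|g]]]; case: v => [|[|[|v]]]; case: v' => [|[|[|v']]] => //= a1 a0 t0 nv; first [by case: nv | nra].
Qed.

Lemma adm : admissible alpha prof dist.
Proof.
split.
- split => [x y|x y|x y z]; rewrite /dist; [exact: D_ge0|exact: D_sym|exact: D_tri].
- move=> i c c'; rewrite /ranks_above /prof !permg_val /dist /=; exact: cons_nat.
- move=> i t c; rewrite /is_top /prof permg_val /dist /= => /eqP ht hct.
  apply: dec_nat => // e; move/eqP: hct; apply; apply: val_inj => /=; by rewrite e.
Qed.

Lemma sum_grp (G : nat -> R) :
  \sum_(i < n) G (grp i) = G 0%N *+ k + G 1%N + (G 2%N *+ k + G 3%N).
Proof.
rewrite big_split_ord /= !big_ord_recr /=.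
have -> : \sum_(i < k) G (grp (lshift k.+1 (widen_ord (leqnSn k) i))) = \sum_(i < k) G 0%N.
  apply: eq_bigr => i _; congr G; rewrite /grp /= ltn_ord //.
have -> : \sum_(i < k) G (grp (rshift k.+1 (widen_ord (leqnSn k) i))) = \sum_(i < k) G 2%N.
  apply: eq_bigr => i _; congr G; rewrite /grp /=.
  have := ltn_ord i; case: ifP => ?; [lia|]; case: ifP => ?; [lia|]; case: ifP => ? ?; lia.
rewrite !sumr_const !card_ord.
congr (_ + _ + (_ + _)); congr G; rewrite /grp /=.
- by rewrite ltnn eqxx.
- case: ifP => ?; [lia|]; case: ifP => ?; [lia|]; case: ifP => ?; lia.
Qed.

End Low.

Lemma lower (R : realType) m' (alpha : R) (f : rule m'.+3) :
  0 <= alpha -> alpha <= 1 ->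
  (forall n (s : profile n m'.+3), has_perfect_matching s (f n s)) ->
  forall eps : R, 0 < eps ->
      exists n (s : profile n m'.+3) (d : point n m'.+3 -> point n m'.+3 -> R),
        admissible alpha s d /\ exists c, (2 + alpha - eps) * SC d c < SC d (f n s).
Proof.
move=> ha0 ha1 hf eps he.
pose k := Num.Def.archi_bound (12 / eps).
have hk : 12 < k%:R * eps.
  have := @archi_boundP R (12 / eps); rewrite divr_ge0 ?ltW // => /(_ isT).
  by rewrite ltr_pdivrMr.
exists (k.+1 + k.+1)%N, (@prof m' k), (dist alpha).
split; first exact: adm.
exists (c1 m'); rewrite win //.
rewrite /SC /dist /=.
rewrite (sum_grp k ha0 ha1 (fun g => D alpha (locg g) Pb)) (sum_grp k ha0 ha1 (fun g => D alpha (locg g) Pa)) /=.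
rewrite mul0rn -[(1 + alpha) *+ k]mulr_natr.
set K := (k%:R : R).
have h2 : 0 <= eps * alpha by rewrite mulr_ge0 // ltW.
have h3 : alpha * alpha <= alpha by rewrite ler_piMl.
lra.
Qed.

Theorem proposition5 (R : realType) (m : nat) (alpha : R) :
  (3 <= m)%N -> 0 <= alpha <= 1 ->
  forall f : rule m,
    (forall n (s : profile n m), has_perfect_matching s (f n s)) ->
    distortion_eq f alpha (2 + alpha).
Proof.
move=> hm /andP [ha0 ha1] f hf; split; first exact: upper.
case: m f hf hm => [|[|[|m']]] // f hf _.
exact: lower.
Qed.
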